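(* For all integers $t,s\ge0$ and $r\ge1$, $$A_{t,s}(r)=\sum_{i=0}^{\min(t,s,r)}\binom{r+t-i}{r}\binom{r+s-i}{r}\binom{r}{i}(-1)^{i},$$ and the generating function satisfies $\sum_{t,s\ge0}A_{t,s}(r)x^ty^s=\dfrac{(1-xy)^r}{(1-x)^{r+1}(1-y)^{r+1}}$.
   Context: The numbers $A_{t,s}(r)$ (integers $t,s$, $r\ge1$) are defined by: $A_{t,s}(r)=0$ if $t<0$ or $s<0$; $A_{t,s}(1)=t+s+1$ for $t,s\ge0$; for $r\ge2$, $t,s\ge0$: $A_{t,s}(r)=\sum_{i=1}^{t}A_{t-i,s}(r-1)+\sum_{i=1}^{s}A_{t,s-i}(r-1)+A_{t,s}(r-1)$. *)

(* Defs.v *)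
From mathcomp Require Import all_boot all_order all_algebra.
Set Implicit Arguments. Unset Strict Implicit. Unset Printing Implicit Defensive.
Import GRing.Theory Num.Theory.

(* Aaux k t s = A_{t,s}(k+1).  Negative indices never occur since the sums
   range over i = 1..t and i = 1..s. *)
Fixpoint Aaux (k t s : nat) : nat :=
  match k with
  | 0 => t + s + 1
  | k'.+1 => \sum_(1 <= i < t.+1) Aaux k' (t - i) s
            + \sum_(1 <= i < s.+1) Aaux k' t (s - i)
            + Aaux k' t s
  end.

(* A t s r = A_{t,s}(r), meaningful for r >= 1. *)
Definition A (t s r : nat) : nat := Aaux r.-1 t s.

(* Bivariate formal power series over int: coefficient of x^t y^s. *)
Definition fps2 := nat -> nat -> int.

Definition fps2_mul (f g : fps2) : fps2 := fun t s =>
  (\sum_(i < t.+1) \sum_(j < s.+1) f i j * g (t - i)%N (s - j)%N)%R.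

(* A bivariate polynomial p : {poly {poly int}} in variables x (inner) and
   y (outer), viewed as a formal power series: coefficient of x^t y^s. *)
Definition fps2_of_poly (p : {poly {poly int}}) : fps2 := fun t s => ((p`_s)`_t)%R.

Definition X2 : {poly {poly int}} := ('X)%:P.
Definition Y2 : {poly {poly int}} := 'X.

(* Main.v *)
Require Import Defs.
From mathcomp Require Import all_boot all_order all_algebra.
From mathcomp Require Import zify ring.
From Stdlib Require Import FunctionalExtensionality.
Import GRing.Theory Num.Theory.

Local Open Scope ring_scope.

Definition PF (N : nat) (f : fps2) : {poly {poly int}} :=
  \poly_(j < N.+1) \poly_(i < N.+1) f i j.

Definition eqN N (p q : {poly {poly int}}) := forall t s : nat, (t <= N)%N -> (s <= N)%N ->
  fps2_of_poly p t s = fps2_of_poly q t s.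

Lemma cfPF N f t s : (t <= N)%N -> (s <= N)%N -> fps2_of_poly (PF N f) t s = f t s.
Proof. by move=> Ht Hs; rewrite /fps2_of_poly /PF coef_poly ltnS Hs coef_poly ltnS Ht. Qed.

Lemma cf_mul p q t s : fps2_of_poly (p * q) t s
  = fps2_mul (fps2_of_poly p) (fps2_of_poly q) t s.
Proof.
rewrite /fps2_of_poly /fps2_mul coefM coef_sum.
under eq_bigr do rewrite coefM.
by rewrite exchange_big.
Qed.

Lemma eqN_mulr N p q c : eqN N p q -> eqN N (p * c) (q * c).
Proof.
move=> E t s Ht Hs; rewrite !cf_mul /fps2_mul.
apply: eq_bigr => i _; apply: eq_bigr => j _; rewrite E //.
  by have := ltn_ord i; lia.
by have := ltn_ord j; lia.
Qed.

Lemma eqN_mull N p q c : eqN N p q -> eqN N (c * p) (c * q).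
Proof. by move=> E; rewrite ![c * _]mulrC; apply: eqN_mulr. Qed.

Lemma eqN_refl N p : eqN N p p.
Proof. by []. Qed.
Lemma eqN_sym N p q : eqN N p q -> eqN N q p.
Proof. by move=> E t s Ht Hs; rewrite E. Qed.
Lemma eqN_trans N p q u : eqN N p q -> eqN N q u -> eqN N p u.
Proof. by move=> E F t s Ht Hs; rewrite E ?F. Qed.

Definition dx (f : fps2) : fps2 := fun t s => f t s - (if t is t'.+1 then f t' s else 0).
Definition dy (f : fps2) : fps2 := fun t s => f t s - (if s is s'.+1 then f t s' else 0).
Definition dxy (f : fps2) : fps2 := fun t s =>
  f t s - (match t, s with t'.+1, s'.+1 => f t' s' | _, _ => 0 end).

Lemma cf_mulX p t s : fps2_of_poly (p * (1 - X2)) t s = dx (fps2_of_poly p) t s.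
Proof.
rewrite mulrBr mulr1 /fps2_of_poly /dx coefB coefB /X2 coefMC coefMX.
by case: t.
Qed.

Lemma cf_mulY p t s : fps2_of_poly (p * (1 - Y2)) t s = dy (fps2_of_poly p) t s.
Proof.
rewrite mulrBr mulr1 /fps2_of_poly /dy coefB /Y2 coefMX.
by case: s => [|s] //=; rewrite ?subr0 ?coefB.
Qed.

Lemma cf_mulXY p t s : fps2_of_poly (p * (1 - X2 * Y2)) t s = dxy (fps2_of_poly p) t s.
Proof.
rewrite mulrBr mulr1 /fps2_of_poly /dxy coefB mulrA /Y2 (coefMX (p * X2)) coefB.
case: s => [|s] //=; first by rewrite coef0; case: t.
by rewrite /X2 coefMC coefMX; case: t.
Qed.

Lemma eqN_dx N p f : eqN N p (PF N f) -> eqN N (p * (1 - X2)) (PF N (dx f)).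
Proof.
move=> E t s Ht Hs; rewrite cf_mulX cfPF // /dx E ?cfPF //.
case: t Ht => [|t] Ht //; rewrite E ?cfPF //; lia.
Qed.

Lemma eqN_dy N p f : eqN N p (PF N f) -> eqN N (p * (1 - Y2)) (PF N (dy f)).
Proof.
move=> E t s Ht Hs; rewrite cf_mulY cfPF // /dy E ?cfPF //.
case: s Hs => [|s] Hs //; rewrite E ?cfPF //; lia.
Qed.

Lemma eqN_dxy N p f : eqN N p (PF N f) -> eqN N (p * (1 - X2 * Y2)) (PF N (dxy f)).
Proof.
move=> E t s Ht Hs; rewrite cf_mulXY cfPF // /dxy E ?cfPF //.
case: t Ht => [|t] Ht //; case: s Hs => [|s] Hs //; rewrite E ?cfPF //; lia.
Qed.

Definition M2 : {poly {poly int}} := (1 - X2) * (1 - Y2).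

Lemma eqN_M N f : eqN N (PF N f * M2) (PF N (dy (dx f))).
Proof. by rewrite /M2 mulrA; apply/eqN_dy/eqN_dx/eqN_refl. Qed.

Definition ones : fps2 := fun _ _ => 1.

Lemma ones_M N : eqN N (PF N ones * M2) 1.
Proof.
apply: eqN_trans _ _ _ _ (eqN_M N ones) _ => t s Ht Hs.
rewrite cfPF // /fps2_of_poly coef1 /dy /dx /ones.
case: t {Ht} => [|t]; case: s {Hs} => [|s] //=; rewrite ?coef1 ?coef0 ?subrr ?subr0 //.
Qed.

Definition step (f : fps2) : fps2 := fun t s =>
  \sum_(0 <= a < t) f a s + \sum_(0 <= b < s) f t b + f t s.

Lemma dd_step f : dy (dx (step f)) = dxy f.
Proof.
apply: functional_extensionality => t; apply: functional_extensionality => s.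
rewrite /dy /dx /dxy /step.
case: t => [|t]; case: s => [|s]; rewrite ?big_nat_recr //= ?(big_geq (leqnn 0)); ring.
Qed.

Definition Ak (k : nat) : fps2 :=
  if k is k'.+1 then fun t s => Posz (Aaux k' t s) else ones.

Lemma sum_rev (F : nat -> nat) t :
  (\sum_(1 <= i < t.+1) F (t - i) = \sum_(0 <= a < t) F a)%N.
Proof.
rewrite big_add1 /= [RHS]big_nat_rev /=.
by apply: eq_big_nat => i _; rewrite add0n.
Qed.

Lemma Posz_sum (F : nat -> nat) m n :
  Posz (\sum_(m <= i < n) F i)%N = \sum_(m <= i < n) Posz (F i).
Proof. by rewrite (big_morph Posz PoszD (erefl (Posz 0))). Qed.

Lemma Ak_step k : Ak k.+1 = step (Ak k).
Proof.
apply: functional_extensionality => t; apply: functional_extensionality => s.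
case: k => [|k].
  rewrite /= /step /ones !sumr_const_nat !subn0 !natz.
  by rewrite !PoszD.
by rewrite /= /step (sum_rev (fun a => Aaux k a s)) (sum_rev (fun b => Aaux k t b)) !PoszD !Posz_sum.
Qed.

Definition d1 (u : nat -> int) : nat -> int := fun a => u a - (if a is a'.+1 then u a' else 0).

Lemma dd_sep u v : dy (dx (fun a b => u a * v b)) = fun a b => d1 u a * d1 v b.
Proof.
apply: functional_extensionality => t; apply: functional_extensionality => s.
rewrite /dy /dx /d1; case: t => [|t]; case: s => [|s]; ring.
Qed.

Lemma d1_bin r : d1 (fun a => Posz 'C(r.+1 + a, r.+1)) = fun a => Posz 'C(r + a, r).
Proof.
apply: functional_extensionality => a; rewrite /d1.
case: a => [|a]; first by rewrite !addn0 !binn subr0.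
rewrite !addSn !addnS binS PoszD; ring.
Qed.

Definition cw (r : nat) : fps2 := fun a b => Posz 'C(r + a, r) * Posz 'C(r + b, r).

Lemma cw0 : cw 0 = ones.
Proof.
apply: functional_extensionality => t; apply: functional_extensionality => s.
by rewrite /cw !bin0.
Qed.

Lemma dd_cw r : dy (dx (cw r.+1)) = cw r.
Proof. by rewrite /cw dd_sep d1_bin. Qed.

Lemma W_inv N r : eqN N (PF N (cw r) * M2 ^+ r.+1) 1.
Proof.
elim: r => [|r IH]; first by rewrite expr1 cw0; apply: ones_M.
rewrite exprS mulrA.
apply: eqN_trans (eqN_mulr _ _ _ _ (eqN_M N _)) _.
by rewrite dd_cw.
Qed.

Lemma A_main N k : eqN N (PF N (Ak k) * M2 ^+ k.+1) ((1 - X2 * Y2) ^+ k).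
Proof.
elim: k => [|k IH]; first by rewrite expr1 expr0; apply: ones_M.
rewrite exprS mulrA.
apply: eqN_trans (eqN_mulr _ _ _ _ (eqN_M N _)) _.
rewrite Ak_step dd_step.
apply: eqN_trans (eqN_mulr _ _ _ _ (eqN_sym _ _ _ (eqN_dxy _ _ _ (eqN_refl N (PF N (Ak k)))))) _.
rewrite mulrAC [X in eqN _ _ X]exprSr.
exact: eqN_mulr.
Qed.

Lemma cf_sign i p t s : fps2_of_poly ((-1) ^+ i * p) t s = (-1) ^+ i * fps2_of_poly p t s.
Proof.
rewrite /fps2_of_poly -signr_odd -[in RHS]signr_odd.
by case: (odd i); rewrite /= ?expr1 ?expr0 ?mulN1r ?mul1r ?coefN.
Qed.

Lemma cf_XYi i p t s : fps2_of_poly (X2 ^+ i * (Y2 ^+ i * p)) t s =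
  if (t < i)%N then 0 else if (s < i)%N then 0 else fps2_of_poly p (t - i)%N (s - i)%N.
Proof.
rewrite /fps2_of_poly /X2 /Y2 -rmorphXn coefCM coefXnM coefXnM.
by case: (s < i)%N; rewrite ?coef0 ?mulr0 //; case: (t < i)%N.
Qed.

Lemma binomXY r : (1 - X2 * Y2) ^+ r =
  \sum_(i < r.+1) ((-1) ^+ i * (X2 ^+ i * Y2 ^+ i)) *+ 'C(r, i).
Proof.
rewrite exprDn; apply: eq_bigr => i _.
by rewrite expr1n mul1r (exprNn (X2 * Y2)) exprMn.
Qed.

Lemma cf_sum m (F : 'I_m -> {poly {poly int}}) t s :
  fps2_of_poly (\sum_(i < m) F i) t s = \sum_(i < m) fps2_of_poly (F i) t s.
Proof. by rewrite /fps2_of_poly !coef_sum. Qed.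

Lemma cf_term i n p t s :
  fps2_of_poly ((((-1) ^+ i * (X2 ^+ i * Y2 ^+ i)) *+ n) * p) t s =
  ((-1) ^+ i * (if (t < i)%N then 0 else if (s < i)%N then 0
                else fps2_of_poly p (t - i)%N (s - i)%N)) *+ n.
Proof.
rewrite mulrnAl {1}/fps2_of_poly coefMn coefMn -/(fps2_of_poly _ t s).
by rewrite -!mulrA cf_sign cf_XYi.
Qed.

Lemma coef_QW N r t s : (t <= N)%N -> (s <= N)%N ->
  fps2_of_poly ((1 - X2 * Y2) ^+ r * PF N (cw r)) t s =
  \sum_(0 <= i < (minn t (minn s r)).+1)
        Posz ('C(r + t - i, r) * 'C(r + s - i, r) * 'C(r, i))%N * (-1) ^+ i.
Proof.
move=> Ht Hs.
rewrite binomXY mulr_suml cf_sum.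
under eq_bigr => i _ do rewrite cf_term.
rewrite -(big_mkord xpredT (fun i => ((-1) ^+ i * (if (t < i)%N then 0 else if (s < i)%N then 0
                else fps2_of_poly (PF N (cw r)) (t - i)%N (s - i)%N)) *+ 'C(r, i))).
rewrite (big_cat_nat (n := (minn t (minn s r)).+1)) //=; last by lia.
rewrite [X in _ + X]big1_seq ?addr0; last first.
  move=> i /andP [_]; rewrite mem_index_iota => /andP [H1 H2].
  have : (t < i)%N || (s < i)%N by lia.
  by case/orP => ->; rewrite ?mulr0 ?mul0rn //; case: (t < i)%N; rewrite ?mulr0 ?mul0rn.
apply: eq_big_nat => i /andP [_ Hi].
have Hit : (t < i)%N = false by lia.
have His : (s < i)%N = false by lia.
rewrite Hit His cfPF; [|lia|lia].
rewrite /cw -!addnBA; [|lia|lia].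
rewrite !PoszM -mulr_natr natz; ring.
Qed.

Lemma fps2_mul_PF N f p t s : (t <= N)%N -> (s <= N)%N ->
  fps2_mul f (fps2_of_poly p) t s = fps2_of_poly (PF N f * p) t s.
Proof.
move=> Ht Hs; rewrite cf_mul /fps2_mul.
apply: eq_bigr => i _; apply: eq_bigr => j _; rewrite cfPF //.
  by have := ltn_ord i; lia.
by have := ltn_ord j; lia.
Qed.

Lemma A_closed N k : eqN N (PF N (Ak k.+1)) ((1 - X2 * Y2) ^+ k.+1 * PF N (cw k.+1)).
Proof.
rewrite -[X in eqN _ X _]mulr1.
apply: eqN_trans (eqN_mull _ _ _ _ (eqN_sym _ _ _ (W_inv N k.+1))) _.
rewrite mulrCA mulrC.
exact: eqN_mulr _ _ _ _ (A_main N k.+1).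
Qed.

Theorem mainTheorem3 (r : nat) : (1 <= r)%N ->
  (forall t s : nat,
     Posz (A t s r) =
     (\sum_(0 <= i < (minn t (minn s r)).+1)
        Posz ('C(r + t - i, r) * 'C(r + s - i, r) * 'C(r, i))%N * (-1) ^+ i)%R)
  /\
  fps2_mul (fun t s => Posz (A t s r))
           (fps2_of_poly ((1 - X2) ^+ r.+1 * (1 - Y2) ^+ r.+1)%R)
  = fps2_of_poly ((1 - X2 * Y2) ^+ r)%R.
Proof.
case: r => [//|k] _.
change (fun t s => Posz (A t s k.+1)) with (Ak k.+1).
split.
  move=> t s.
  have Ht : (t <= maxn t s)%N by lia.
  have Hs : (s <= maxn t s)%N by lia.
  change (Posz (A t s k.+1)) with (Ak k.+1 t s).
  rewrite -(cfPF (maxn t s) (Ak k.+1) t s Ht Hs) -(coef_QW (maxn t s) k.+1 t s Ht Hs).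
  exact: A_closed.
apply: functional_extensionality => t; apply: functional_extensionality => s.
have Ht : (t <= maxn t s)%N by lia.
have Hs : (s <= maxn t s)%N by lia.
rewrite (fps2_mul_PF (maxn t s)) // -exprMn.
exact: A_main.
Qed.
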